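(* Let $q \geq 1$ and let $k$ be a positive integer with $k < n$. Let $\boldsymbol{B} = [\boldsymbol{B}[1] \ \cdots \ \boldsymbol{B}[n]] \in \mathbb{R}^{D \times N}$ be a dictionary with unit-norm columns, blocks $\boldsymbol{B}[i] \in \mathbb{R}^{D \times m_i}$, and pairwise disjoint block subspaces $\mathcal{S}_i = \operatorname{span}(\boldsymbol{B}[i])$. Assume that every signal $\boldsymbol{y} \in \mathbb{R}^D$ that admits a $k$-block-sparse representation admits a unique one. For an index set $\Lambda \subseteq \{1,\dots,n\}$ and $\boldsymbol{x} \in \bigoplus_{i \in \Lambda} \mathcal{S}_i$ let $$W_\Lambda(\boldsymbol{x}) = \min\Big\{ \sum_{i \in \Lambda} \|\boldsymbol{B}[i]\boldsymbol{c}[i]\|_q \;:\; \boldsymbol{x} = \sum_{i \in \Lambda} \boldsymbol{B}[i]\boldsymbol{c}[i] \Big\}.$$ Then the following are equivalent: (i) for every $\Lambda_k \subseteq \{1,\dots,n\}$ with $|\Lambda_k| = k$ and every $\boldsymbol{y} \in \bigoplus_{i \in \Lambda_k} \mathcal{S}_i$, every optimal solution $\boldsymbol{c}^*$ of $P'_{\ell_q/\ell_1}(\boldsymbol{y})$ satisfies $\boldsymbol{B}[i]\boldsymbol{c}^*[i] = \boldsymbol{0}$ for all $i \notin \Lambda_k$ (i.e. the solution of $P'_{\ell_q/\ell_1}$ coincides with that of $P'_{\ell_q/\ell_0}$); (ii) for every $\Lambda_k$ with $|\Lambda_k| = k$, writing $\widehat{\Lambda}_k = \{1,\dots,n\}\setminus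 \Lambda_k$, and every nonzero $\boldsymbol{x} \in \big(\bigoplus_{i \in \Lambda_k} \mathcal{S}_i\big) \cap \big(\bigoplus_{i \in \widehat{\Lambda}_k} \mathcal{S}_i\big)$, one has $W_{\Lambda_k}(\boldsymbol{x}) < W_{\widehat{\Lambda}_k}(\boldsymbol{x})$.
   Context: The dictionary $\boldsymbol{B} \in \mathbb{R}^{D\times N}$ has columns of unit Euclidean norm and is partitioned into $n$ blocks $\boldsymbol{B}[i] \in \mathbb{R}^{D \times m_i}$; blocks may have linearly dependent columns. $\mathcal{S}_i$ is the column span of $\boldsymbol{B}[i]$, and $\mathcal{S}_i \cap \mathcal{S}_j = \{0\}$ for $i \neq j$. A vector $\boldsymbol{c} \in \mathbb{R}^N$ is written $\boldsymbol{c} = (\boldsymbol{c}[1]; \dots; \boldsymbol{c}[n])$ with $\boldsymbol{c}[i] \in \mathbb{R}^{m_i}$. A $k$-block-sparse representation of $\boldsymbol{y}$ is an expression $\boldsymbol{y} = \sum_{i \in \Lambda} \boldsymbol{s}_i$ with $|\Lambda| \le k$ and $\boldsymbol{s}_i \in \mathcal{S}_i \setminus \{0\}$; it is unique if any two such expressions have the same $\Lambda$ and the same $\boldsymbol{s}_i$. $P'_{\ell_q/\ell_1}(\boldsymbol{y})$ is the convex program $\min_{\boldsymbol{c}} \sum_{i=1}^n \|\boldsymbol{B}[i]\boldsymbol{c}[i]\|_q$ subject to $\boldsymbol{y} = \boldsymbol{B}\boldsymbol{c}$; $P'_{\ell_q/\ell_0}(\boldsymbol{y})$ is $\min_{\boldsymbol{c}}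 \#\{i : \|\boldsymbol{B}[i]\boldsymbol{c}[i]\|_q \neq 0\}$ subject to $\boldsymbol{y} = \boldsymbol{B}\boldsymbol{c}$. *)

(* Defs.v *)
From HB Require Import structures.
From mathcomp Require Import all_boot all_order all_algebra.
From mathcomp Require Import classical_sets reals exp.
Set Implicit Arguments. Unset Strict Implicit. Unset Printing Implicit Defensive.
Import Order.TTheory GRing.Theory Num.Theory.
Local Open Scope ring_scope.
Local Open Scope classical_set_scope.

Definition block_dict (R : realType) (D n : nat) (m : 'I_n -> nat) :=
  forall i : 'I_n, 'M[R]_(D, m i).

Definition block_coef (R : realType) (n : nat) (m : 'I_n -> nat) :=
  forall i : 'I_n, 'cV[R]_(m i).

Definition lqnorm (R : realType) (q : R) (D : nat) (v : 'cV[R]_D) : R :=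
  (\sum_(j < D) (`|v j 0| `^ q)) `^ q^-1.

Definition unit_norm_columns (R : realType) D n m (B : @block_dict R D n m) :=
  forall (i : 'I_n) (j : 'I_(m i)), Num.sqrt (\sum_(r < D) (B i r j) ^+ 2) = 1.

Definition inS (R : realType) D n m (B : @block_dict R D n m) (i : 'I_n)
  (v : 'cV[R]_D) : Prop := exists c : 'cV[R]_(m i), v = B i *m c.

Definition disjoint_blocks (R : realType) D n m (B : @block_dict R D n m) :=
  forall (i j : 'I_n) (v : 'cV[R]_D), i != j -> inS B i v -> inS B j v -> v = 0.

Definition blocksum (R : realType) D n m (B : @block_dict R D n m)
  (L : {set 'I_n}) (c : block_coef R m) : 'cV[R]_D :=
  \sum_(i in L) B i *m c i.

Definition in_blocksum (R : realType) D n m (B : @block_dict R D n m)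
  (L : {set 'I_n}) (x : 'cV[R]_D) : Prop :=
  exists c : block_coef R m, x = blocksum B L c.

Definition kbs_rep (R : realType) D n m (B : @block_dict R D n m) (k : nat)
  (y : 'cV[R]_D) (L : {set 'I_n}) (s : 'I_n -> 'cV[R]_D) : Prop :=
  [/\ (#|L| <= k)%N,
      (forall i, i \in L -> inS B i (s i) /\ s i != 0)
    & y = \sum_(i in L) s i].

Definition unique_kbs (R : realType) D n m (B : @block_dict R D n m) (k : nat) :=
  forall (y : 'cV[R]_D) L1 s1 L2 s2,
    kbs_rep B k y L1 s1 -> kbs_rep B k y L2 s2 ->
    L1 = L2 /\ (forall i, i \in L1 -> s1 i = s2 i).

Definition obj_lq_l1 (R : realType) (q : R) D n m (B : @block_dict R D n m)
  (c : block_coef R m) : R :=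
  \sum_(i < n) lqnorm q (B i *m c i).

Definition opt_lq_l1 (R : realType) (q : R) D n m (B : @block_dict R D n m)
  (y : 'cV[R]_D) (c : block_coef R m) : Prop :=
  y = blocksum B [set: 'I_n]%SET c /\
  forall c' : block_coef R m, y = blocksum B [set: 'I_n]%SET c' ->
    obj_lq_l1 q B c <= obj_lq_l1 q B c'.

(* W_L(x) = min { sum_{i in L} ||B[i]c[i]||_q : x = sum_{i in L} B[i]c[i] },
   written as an infimum (the minimum is attained for x in the sum of the S_i). *)
Definition W_lq (R : realType) (q : R) D n m (B : @block_dict R D n m)
  (L : {set 'I_n}) (x : 'cV[R]_D) : R :=
  inf [set w : R | exists c : block_coef R m,
         x = blocksum B L c /\ w = \sum_(i in L) lqnorm q (B i *m c i)].

(* Main.v *)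
Require Import Defs.
From HB Require Import structures.
From mathcomp Require Import all_boot all_order all_algebra.
From mathcomp Require Import classical_sets reals exp.
From mathcomp Require Import ring lra.
From mathcomp Require Import interval_inference boolp topology normedtype sequences derive convex hoelder.
Set Implicit Arguments. Unset Strict Implicit. Unset Printing Implicit Defensive.
Import Order.TTheory GRing.Theory Num.Theory.
Import numFieldNormedType.Exports.
Local Open Scope ring_scope.
Local Open Scope classical_set_scope.
Lemma convq (R : realType) (q t x y : R) : 1 <= q -> 0 <= t -> t <= 1 -> 0 <= x -> 0 <= y ->
  (t * x + (1 - t) * y) `^ q <= t * x `^ q + (1 - t) * y `^ q.
Proof.
move=> q1 t0 t1 x0 y0.
have := @convex_powR R q q1 (Itv01 t0 t1) x y.
rewrite !inE /= !in_itv /= !andbT => /(_ x0 y0).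
by rewrite !convRE.
Qed.

Lemma powRK (R : realType) (a q : R) : 0 <= a -> q != 0 -> (a `^ q) `^ q^-1 = a.
Proof. by move=> a0 q0; rewrite -powRrM mulfV // powRr1. Qed.

Lemma powRKV (R : realType) (a q : R) : 0 <= a -> q != 0 -> (a `^ q^-1) `^ q = a.
Proof. by move=> a0 q0; rewrite -powRrM mulVf // powRr1. Qed.

Section lq.
Variables (R : realType) (q : R).
Hypothesis q1 : 1 <= q.
Let q0 : 0 < q. Proof. exact: lt_le_trans q1. Qed.
Let qn0 : q != 0. Proof. by rewrite gt_eqF. Qed.

Lemma lq_ge0 D (v : 'cV[R]_D) : 0 <= lqnorm q v.
Proof. exact: powR_ge0. Qed.

Lemma lq_sum_ge0 D (v : 'cV[R]_D) : 0 <= \sum_(j < D) `|v j 0| `^ q.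
Proof. by apply: sumr_ge0 => j _; exact: powR_ge0. Qed.

Lemma lq_pow D (v : 'cV[R]_D) : lqnorm q v `^ q = \sum_(j < D) `|v j 0| `^ q.
Proof. by rewrite /lqnorm powRKV // lq_sum_ge0. Qed.

Lemma lq_entry D (v : 'cV[R]_D) j : `|v j 0| <= lqnorm q v.
Proof.
rewrite -[leLHS](@powRK _ _ q) //.
apply: ge0_ler_powR; rewrite ?invr_ge0 ?nnegrE ?powR_ge0 ?lq_sum_ge0 //; first exact: ltW.
rewrite [leRHS](bigD1 j) //= lerDl; apply: sumr_ge0 => i _; exact: powR_ge0.
Qed.

Lemma lq_eq0 D (v : 'cV[R]_D) : lqnorm q v = 0 -> v = 0.
Proof.
move=> /powR_eq0_eq0 /eqP; rewrite psumr_eq0; last by move=> i _; exact: powR_ge0.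
move=> /allP H; apply/matrixP => i j; rewrite (ord1 j) mxE.
have /H : i \in index_enum 'I_D by rewrite mem_index_enum.
by move=> /implyP /(_ isT) /eqP /powR_eq0_eq0 /normr0_eq0.
Qed.

Lemma lq0 D : lqnorm q (0 : 'cV[R]_D) = 0.
Proof.
rewrite /lqnorm big1 ?powR0 ?invr_eq0 // => i _.
by rewrite mxE normr0 powR0.
Qed.

Lemma tri_core D (a b : 'I_D -> R) (A B : R) :
  (forall j, 0 <= a j) -> (forall j, 0 <= b j) -> 0 < A -> 0 < B ->
  \sum_(j < D) a j `^ q = A `^ q -> \sum_(j < D) b j `^ q = B `^ q ->
  \sum_(j < D) (a j + b j) `^ q <= (A + B) `^ q.
Proof.
move=> a0 b0 Ap Bp sA sB.
have A0 : 0 <= A := ltW Ap.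
have B0 : 0 <= B := ltW Bp.
have ABp : 0 < A + B := addr_gt0 Ap Bp.
pose t := A / (A + B).
have t0 : 0 <= t := divr_ge0 A0 (ltW ABp).
have t1 : t <= 1 by rewrite /t ler_pdivrMr // mul1r lerDl.
have key : forall j : 'I_D, (a j + b j) `^ q <=
    (A + B) `^ q * (t * (a j / A) `^ q + (1 - t) * (b j / B) `^ q).
  move=> j.
  have -> : a j + b j = (A + B) * (t * (a j / A) + (1 - t) * (b j / B)).
    rewrite /t; field.
    by rewrite !gt_eqF.
  have aA : 0 <= a j / A := divr_ge0 (a0 j) A0.
  have bB : 0 <= b j / B := divr_ge0 (b0 j) B0.
  have t1' : 0 <= 1 - t by rewrite subr_ge0.
  rewrite powRM; [|exact: ltW|by rewrite addr_ge0 // mulr_ge0].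
  by rewrite ler_wpM2l ?powR_ge0 //; apply: convq.
have sumA : \sum_(j < D) (a j / A) `^ q = 1.
  under eq_bigr => j _ do rewrite powRM ?invr_ge0 //.
  by rewrite -mulr_suml sA -powRM ?invr_ge0 // mulfV ?gt_eqF // powR1.
have sumB : \sum_(j < D) (b j / B) `^ q = 1.
  under eq_bigr => j _ do rewrite powRM ?invr_ge0 //.
  by rewrite -mulr_suml sB -powRM ?invr_ge0 // mulfV ?gt_eqF // powR1.
apply: (le_trans (ler_sum _ (fun j _ => key j))).
by rewrite -mulr_sumr big_split /= -!mulr_sumr sumA sumB !mulr1 subrKC mulr1.
Qed.

Lemma lq_triangle D (u v : 'cV[R]_D) : lqnorm q (u + v) <= lqnorm q u + lqnorm q v.
Proof.
have [A0|A0] := eqVneq (lqnorm q u) 0.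
  by rewrite (lq_eq0 A0) add0r lq0 add0r.
have [B0|B0] := eqVneq (lqnorm q v) 0.
  by rewrite (lq_eq0 B0) addr0 lq0 addr0.
have Ap : 0 < lqnorm q u by rewrite lt0r A0 /=; exact: (lq_ge0 u).
have Bp : 0 < lqnorm q v by rewrite lt0r B0 /=; exact: (lq_ge0 v).
have H := tri_core (fun j => normr_ge0 (u j 0)) (fun j => normr_ge0 (v j 0)) Ap Bp
   (esym (lq_pow u)) (esym (lq_pow v)).
have H2 : \sum_(j < D) `|(u + v) j 0| `^ q <= (lqnorm q u + lqnorm q v) `^ q.
  apply: le_trans H; apply: ler_sum => j _; rewrite mxE.
  apply: ge0_ler_powR; rewrite ?nnegrE ?addr_ge0 //; first exact: ltW.
  exact: ler_normD.
rewrite /lqnorm -[leRHS](@powRK _ _ q); [|exact: addr_ge0 (lq_ge0 u) (lq_ge0 v)|by []].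
apply: ge0_ler_powR H2; rewrite ?invr_ge0 ?nnegrE ?powR_ge0 //; first exact: ltW.
exact: lq_sum_ge0.
Qed.

End lq.
Section contlemmas.
Variable R : realType.

Lemma cont_powR_pos (p a : R) : 0 < a -> {for a, continuous (fun b : R => powR b p)}.
Proof.
move=> a0.
have E : {near a, (fun b => expR (p * ln b)) =1 (fun b : R => powR b p)}.
  near=> b; rewrite /powR gt_eqF //; near: b; exact: lt_nbhsr.
apply: cvg_trans; first exact: (near_eq_cvg E).
have -> : powR a p = expR (p * ln a) by rewrite /powR gt_eqF.
apply: (@continuous_comp R R R (fun b => p * ln b) expR a).
  apply: continuousM; first exact: cst_continuous.
  exact: continuous_ln.
exact: continuous_expR.
Unshelve. all: by end_near.
Qed.

Lemma cont_phi (p : R) : 0 < p -> continuous (fun x : R => powR `|x| p).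
Proof.
move=> p0 x.
have [x0|x0] := eqVneq x 0.
  rewrite x0.
  apply/cvgrPdist_lt => e e0.
  near=> y.
  rewrite normr0 powR0 ?gt_eqF // sub0r normrN ger0_norm ?powR_ge0 //.
  rewrite -[ltRHS](@powRKV _ e p) ?gt_eqF ?(ltW e0) //.
  apply: gt0_ltr_powR => //; rewrite ?nnegrE ?powR_ge0 //.
  near: y.
  have ep : 0 < e `^ p^-1 by rewrite powR_gt0.
  apply/nbhs_normP; exists (e `^ p^-1) => //= z.
  by rewrite /= sub0r normrN.
apply: (@continuous_comp R R R Num.norm (fun b : R => powR b p) x).
  exact: norm_continuous.
by apply: cont_powR_pos; rewrite normr_gt0.
Unshelve. all: by end_near.
Qed.

Lemma cont_sum (T : topologicalType) (I : eqType) (r : seq I) (P : pred I) (f : I -> T -> R) :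
  (forall i, continuous (f i)) -> continuous (fun x => \sum_(i <- r | P i) f i x).
Proof.
move=> fc; elim: r => [|i r IH].
  under eq_fun do rewrite big_nil; exact: cst_continuous.
under eq_fun do rewrite big_cons.
case: (P i).
  by move=> x; apply: continuousD; [exact: fc | exact: IH].
exact: IH.
Qed.

End contlemmas.
Section closedness.
Variable R : realType.
Import ArrowAsProduct.

Lemma coordR_cont k (j : 'I_k) : continuous (fun u : 'rV[R]_k => u 0 j).
Proof. exact: coord_continuous. Qed.

Lemma closed_ker k l (K : 'M[R]_(k, l)) : closed [set u : 'rV[R]_k | u *m K = 0].
Proof.
have -> : [set u : 'rV[R]_k | u *m K = 0] =
    \bigcap_(j in [set: 'I_l]) ((fun u : 'rV[R]_k => \sum_(a < k) u 0 a * K a j) @^-1` [set 0]).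
  apply/seteqP; split => u /=.
    by move=> /matrixP H j _ /=; have := H 0 j; rewrite !mxE.
  move=> H; apply/matrixP => a j; rewrite (ord1 a) !mxE; exact: (H j I).
apply: closed_bigI => j _.
apply: (proj1 (continuous_closedP _)); last exact: closed_eq.
apply: cont_sum => a x.
apply: continuousM; first exact: coordR_cont.
exact: cst_continuous.
Qed.

Lemma closed_normle k (M : R) : closed [set u : 'rV[R]_k | `|u| <= M].
Proof.
have -> : [set u : 'rV[R]_k | `|u| <= M] = Num.norm @^-1` [set r | r <= M] by [].
apply: (proj1 (continuous_closedP _)); last exact: closed_le.
exact: norm_continuous.
Qed.

Lemma compact_normle k (M : R) : compact [set u : 'rV[R]_k | `|u| <= M].
Proof.
apply: bounded_closed_compact; last exact: closed_normle.
exists M; split; first exact: num_real.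
by move=> r Mr u /= uM; apply: le_trans uM (ltW Mr).
Qed.

Lemma cont_proj n k (i : 'I_n) : continuous (fun s : 'I_n -> 'rV[R]_k => s i).
Proof. exact: (@proj_continuous _ (fun=> 'rV[R]_k) i). Qed.

Lemma cont_entry n k (i : 'I_n) (j : 'I_k) :
  continuous (fun s : 'I_n -> 'rV[R]_k => s i 0 j).
Proof.
move=> s.
apply: (@continuous_comp _ _ _ (fun s : 'I_n -> 'rV[R]_k => s i) (fun u : 'rV[R]_k => u 0 j)).
  exact: cont_proj.
exact: coordR_cont.
Qed.

End closedness.
Section existence.
Import ArrowAsProduct.
Variables (R : realType) (q : R) (D n : nat) (m : 'I_n -> nat) (B : block_dict R D m).
Hypothesis q1 : 1 <= q.
Let q0 : 0 < q. Proof. exact: lt_le_trans q1. Qed.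

Variable S : {set 'I_n}.

Let Bt i := (B i)^T.
Let K i := cokermx (Bt i).

Definition sof (c : block_coef R m) : 'I_n -> 'rV[R]_D :=
  fun i => if i \in S then (B i *m c i)^T else 0.
Definition cof (s : 'I_n -> 'rV[R]_D) : block_coef R m :=
  fun i => (s i *m pinvmx (Bt i))^T.
Definition Fobj (s : 'I_n -> 'rV[R]_D) := \sum_(i in S) lqnorm q ((s i)^T).

Lemma cof_sof s i : s i *m K i = 0 -> B i *m cof s i = (s i)^T.
Proof.
move=> H; rewrite /cof -[B i]trmxK -trmx_mul.
by rewrite -/(Bt i) mulmxKpV // submxE H.
Qed.

Lemma sof_valid c i : sof c i *m K i = 0.
Proof.
rewrite /sof; case: (i \in S); last by rewrite mul0mx.
by rewrite /K /Bt trmx_mul -mulmxA mulmx_coker mulmx0.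
Qed.

Lemma Fobj_sof c : Fobj (sof c) = \sum_(i in S) lqnorm q (B i *m c i).
Proof. by apply: eq_bigr => i iS; rewrite /sof iS trmxK. Qed.

Lemma blocksum_sof c : \sum_(i in S) (sof c i)^T = blocksum B S c.
Proof. by apply: eq_bigr => i iS; rewrite /sof iS trmxK. Qed.

Lemma Fobj_cont : continuous Fobj.
Proof.
have -> : Fobj = fun s => \sum_(i in S)
    powR `|\sum_(j < D) powR `|s i 0 j| q| q^-1.
  apply: funext => s; apply: eq_bigr => i _.
  rewrite /lqnorm ger0_norm; last by apply: sumr_ge0 => j _; exact: powR_ge0.
  by congr (powR _ _); apply: eq_bigr => j _; rewrite mxE.
apply: cont_sum => i s.
apply: (@continuous_comp _ _ _ (fun s : 'I_n -> 'rV[R]_D => \sum_(j < D) powR `|s i 0 j| q)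
   (fun r : R => powR `|r| q^-1)); last by apply: cont_phi; rewrite invr_gt0.
apply: cont_sum => j t.
apply: (@continuous_comp _ _ _ (fun s : 'I_n -> 'rV[R]_D => s i 0 j) (fun r : R => powR `|r| q));
  last exact: cont_phi.
exact: cont_entry.
Qed.


Lemma normrow_le (u : 'rV[R]_D) : `|u| <= lqnorm q u^T.
Proof.
rewrite /Num.norm /= mx_normrE; apply: bigmax_le; first exact: lq_ge0.
move=> [a b] _ /=; rewrite (ord1 a).
by have := lq_entry q1 u^T b; rewrite mxE.
Qed.

Lemma term_le_F s i : i \in S -> lqnorm q ((s i)^T) <= Fobj s.
Proof.
move=> iS; rewrite /Fobj (bigD1 i) //= lerDl.
by apply: sumr_ge0 => j _; exact: lq_ge0.
Qed.

Lemma Fobj_ge0 s : 0 <= Fobj s.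
Proof. by apply: sumr_ge0 => j _; exact: lq_ge0. Qed.

Lemma exists_min x c0 : x = blocksum B S c0 ->
  exists c, x = blocksum B S c /\
    forall c', x = blocksum B S c' ->
      \sum_(i in S) lqnorm q (B i *m c i) <= \sum_(i in S) lqnorm q (B i *m c' i).
Proof.
move=> Hc0.
pose M := Fobj (sof c0).
have M0 : 0 <= M := Fobj_ge0 _.
have HM : Fobj (sof c0) <= M := lexx _.
clearbody M.
pose Box := [set s : 'I_n -> 'rV[R]_D | forall i, (fun i => [set u : 'rV[R]_D | `|u| <= M]) i (s i)].
pose Z1 := [set s : 'I_n -> 'rV[R]_D | forall i, s i *m K i = 0].
pose Z2 := [set s : 'I_n -> 'rV[R]_D | forall l, \sum_(i in S) s i 0 l = x l 0].
pose A := Box `&` (Z1 `&` Z2).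
have cZ1 : closed Z1.
  have -> : Z1 = \bigcap_(i in [set: 'I_n])
      ((fun s : 'I_n -> 'rV[R]_D => s i) @^-1` [set u : 'rV[R]_D | u *m K i = 0]).
    apply/seteqP; split => s /= H i; [move=> _; exact: H | exact: (H i I)].
  apply: closed_bigI => i _.
  apply: (proj1 (continuous_closedP _)); last exact: closed_ker.
  exact: cont_proj.
have cZ2 : closed Z2.
  have -> : Z2 = \bigcap_(l in [set: 'I_D])
      ((fun s : 'I_n -> 'rV[R]_D => \sum_(i in S) s i 0 l) @^-1` [set x l 0]).
    apply/seteqP; split => s /= H l; [move=> _; exact: H | exact: (H l I)].
  apply: closed_bigI => l _.
  apply: (proj1 (continuous_closedP _)); last exact: closed_eq.
  apply: cont_sum => i; exact: cont_entry.
have cA : compact A.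
  apply: compact_closedI; last exact: closedI.
  by apply: tychonoff => i; exact: compact_normle.
have inA c : x = blocksum B S c -> Fobj (sof c) <= M -> A (sof c).
  move=> Hc FM; split; [|split].
  - move=> i /=; rewrite /sof; case: ifP => iS; last by rewrite normr0.
    apply: le_trans (normrow_le _) _; apply: le_trans FM.
    by have := term_le_F (sof c) iS; rewrite /sof iS.
  - exact: sof_valid.
  - move=> l; rewrite Hc -blocksum_sof summxE.
    by apply: eq_bigr => i _; rewrite mxE.
have fromA s : A s -> x = blocksum B S (cof s) /\
    \sum_(i in S) lqnorm q (B i *m cof s i) = Fobj s.
  move=> [_ [Z1s Z2s]]; split.
    apply/matrixP => l b; rewrite (ord1 b) -(Z2s l) /blocksum summxE.
    by apply: eq_bigr => i _; rewrite cof_sof // mxE.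
  by apply: eq_bigr => i _; rewrite cof_sof.
have A0 : A !=set0 by exists (sof c0); exact: (inA c0 Hc0 HM).
have sc0 : sof c0 \in A by apply: mem_set; exact: (inA c0 Hc0 HM).
clearbody A.
have [s sA smin] := compact_EVT_min A0 cA (@continuous_subspaceT _ _ A _ Fobj_cont).
have sA' : A s := set_mem sA.
have [Hfeas Hval] := fromA s sA'.
exists (cof s); split; first exact: Hfeas.
move=> c' Hc'.
suff H : Fobj s <= Fobj (sof c') by move: H; rewrite -Hval Fobj_sof.
have [FM|FM'] : Fobj (sof c') <= M \/ M <= Fobj (sof c').
  by apply/orP; exact: le_total.
  by apply: smin; apply: mem_set; exact: (inA c' Hc' FM).
apply: le_trans FM'.
apply: le_trans (smin _ sc0) HM.
Qed.

End existence.
Section mainsec.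
Variables (R : realType) (q : R) (D n : nat) (m : 'I_n -> nat) (B : block_dict R D m).
Hypothesis q1 : 1 <= q.

Definition restrf (L : {set 'I_n}) (f : block_coef R m) : block_coef R m :=
  fun i => if i \in L then f i else 0.

Lemma sumT_split (V : zmodType) (L : {set 'I_n}) (F : 'I_n -> V) :
  \sum_(i in [set: 'I_n]%SET) F i = \sum_(i in L) F i + \sum_(i in ~: L) F i.
Proof. by rewrite (big_setID L) /= finset.setTI finset.setTD. Qed.

Lemma sumord_split (V : zmodType) (L : {set 'I_n}) (F : 'I_n -> V) :
  \sum_(i < n) F i = \sum_(i in L) F i + \sum_(i in ~: L) F i.
Proof.
rewrite -sumT_split; apply: eq_bigl => i; by rewrite finset.in_setT.
Qed.

Lemma bsT_restr L f : blocksum B [set: 'I_n]%SET (restrf L f) = blocksum B L f.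
Proof.
rewrite /blocksum (sumT_split L) [X in _ + X]big1 ?addr0.
  by apply: eq_bigr => i iL; rewrite /restrf iL.
by move=> i; rewrite finset.in_setC /restrf => /negbTE ->; rewrite mulmx0.
Qed.

Lemma objT_restr L f :
  \sum_(i < n) lqnorm q (B i *m restrf L f i) = \sum_(i in L) lqnorm q (B i *m f i).
Proof.
apply: (eq_trans (sumord_split L (fun i => lqnorm q (B i *m restrf L f i)))).
have E1 : \sum_(i in ~: L) lqnorm q (B i *m restrf L f i) = 0.
  apply: big1 => i; rewrite finset.in_setC /restrf => /negbTE ->; rewrite mulmx0; exact: (lq0 q1 _).
have E2 : \sum_(i in L) lqnorm q (B i *m restrf L f i) = \sum_(i in L) lqnorm q (B i *m f i).
  by apply: eq_bigr => i iL; rewrite /restrf iL.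
by rewrite [X in _ + X]E1 addr0; exact: E2.
Qed.

Lemma obj_setT c : \sum_(i in [set: 'I_n]%SET) lqnorm q (B i *m c i) = obj_lq_l1 q B c.
Proof. by rewrite /obj_lq_l1; apply: eq_bigl => i; rewrite finset.in_setT. Qed.

Lemma W_lb L x w : w \in [set w : R | exists c : block_coef R m,
         x = blocksum B L c /\ w = \sum_(i in L) lqnorm q (B i *m c i)] -> W_lq q B L x <= w.
Proof.
move=> /set_mem Hw; apply: ge_inf => //.
exists 0 => v [c [_ ->]]; apply: sumr_ge0 => i _; exact: lq_ge0.
Qed.

Lemma W_le L x c : x = blocksum B L c -> W_lq q B L x <= \sum_(i in L) lqnorm q (B i *m c i).
Proof. by move=> Hc; apply: W_lb; apply: mem_set; exists c. Qed.

Lemma W_min L x c : x = blocksum B L c ->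
  (forall c', x = blocksum B L c' ->
     \sum_(i in L) lqnorm q (B i *m c i) <= \sum_(i in L) lqnorm q (B i *m c' i)) ->
  W_lq q B L x = \sum_(i in L) lqnorm q (B i *m c i).
Proof.
move=> Hc Hmin; apply/eqP; rewrite eq_le; apply/andP; split; first exact: W_le.
apply: lb_le_inf; first by exists (\sum_(i in L) lqnorm q (B i *m c i)); exists c.
by move=> v [c' [Hc' ->]]; exact: Hmin.
Qed.

End mainsec.
Section mainproof.
Variables (R : realType) (q : R) (D n : nat) (m : 'I_n -> nat) (B : block_dict R D m) (k : nat).
Hypothesis q1 : 1 <= q.

Lemma blocksum_add L (f g : block_coef R m) :
  blocksum B L (fun i => f i + g i) = blocksum B L f + blocksum B L g.
Proof.
rewrite /blocksum -big_split /=; apply: eq_bigr => i _; exact: mulmxDr.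
Qed.

Lemma blocksum_sub L (f g : block_coef R m) :
  blocksum B L (fun i => f i - g i) = blocksum B L f - blocksum B L g.
Proof.
rewrite /blocksum -sumrB; apply: eq_bigr => i _; exact: mulmxBr.
Qed.

Lemma dir2 :
  (forall (L : {set 'I_n}), #|L| = k ->
     forall (x : 'cV[R]_D), x != 0 ->
       in_blocksum B L x -> in_blocksum B (~: L) x ->
       W_lq q B L x < W_lq q B (~: L) x) ->
  forall (L : {set 'I_n}), #|L| = k ->
     forall (y : 'cV[R]_D), in_blocksum B L y ->
     forall c : block_coef R m, opt_lq_l1 q B y c ->
     forall i : 'I_n, i \notin L -> B i *m c i = 0.
Proof.
move=> H2 L hL y [cy Hcy] c [Hyc Hmin] i hi.
have [x Hx] : exists x, x = blocksum B (~: L) c by eexists.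
have Hsplit : y = blocksum B L c + x.
  rewrite Hx; apply: (eq_trans Hyc); exact: (sumT_split L (fun i => B i *m c i)).
have Hobj : obj_lq_l1 q B c = \sum_(i in L) lqnorm q (B i *m c i)
     + \sum_(i in ~: L) lqnorm q (B i *m c i).
  exact: (sumord_split L (fun i => lqnorm q (B i *m c i))).
suff Hle : \sum_(i in ~: L) lqnorm q (B i *m c i) <= 0.
  have H0 : \sum_(i in ~: L) lqnorm q (B i *m c i) = 0.
    apply/eqP; rewrite eq_le Hle /=; apply: sumr_ge0 => j _; exact: lq_ge0.
  have Hnn : forall j, j \in ~: L -> 0 <= lqnorm q (B j *m c j).
    by move=> j _; exact: lq_ge0.
  apply: lq_eq0; apply: (psumr_eq0P Hnn H0).
  by rewrite finset.in_setC.
have [x0|x0] := eqVneq x 0.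
  have Hf : y = blocksum B [set: 'I_n]%SET (restrf L c).
    by rewrite bsT_restr Hsplit x0 addr0.
  have E' : obj_lq_l1 q B (restrf L c) = \sum_(i in L) lqnorm q (B i *m c i).
    by apply: objT_restr.
  have := Hmin _ Hf.
  rewrite E' Hobj.
  by rewrite -[X in _ <= X]addr0 lerD2l.
exfalso.
have xL : in_blocksum B L x.
  exists (fun i => cy i - c i); rewrite blocksum_sub -Hcy.
  by rewrite Hsplit addrAC subrr add0r.
have xLc : in_blocksum B (~: L) x by exists c.
have Hlt := H2 L hL x x0 xL xLc.
have Hle1 := W_le q Hx.
case: xL => c0 Hc0.
have [e [He Hemin]] := exists_min q1 Hc0.
have HW := W_min He Hemin.
pose c' := restrf L (fun i => c i + e i).
have Hf : y = blocksum B [set: 'I_n]%SET c'.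
  by rewrite /c' bsT_restr blocksum_add -He Hsplit.
have Hm := Hmin _ Hf.
have Hc'le : obj_lq_l1 q B c' <= \sum_(i in L) lqnorm q (B i *m c i) + \sum_(i in L) lqnorm q (B i *m e i).
  have E' : obj_lq_l1 q B c' = \sum_(i in L) lqnorm q (B i *m (c i + e i)).
    by apply: objT_restr.
  rewrite E'.
  apply: (@le_trans _ _ (\sum_(i in L) (lqnorm q (B i *m c i) + lqnorm q (B i *m e i)))).
    by apply: ler_sum => j _; rewrite mulmxDr; exact: lq_triangle.
  by rewrite big_split.
have : obj_lq_l1 q B c' < obj_lq_l1 q B c.
  apply: (le_lt_trans Hc'le); rewrite Hobj ltrD2l.
  have HW' : \sum_(i in L) lqnorm q (B i *m e i) <= W_lq q B L x.
    rewrite HW; exact: lexx.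
  exact: (le_lt_trans HW' (lt_le_trans Hlt Hle1)).
by rewrite ltNge Hm.
Qed.

End mainproof.
Section mainproof2.
Variables (R : realType) (q : R) (D n : nat) (m : 'I_n -> nat) (B : block_dict R D m) (k : nat).
Hypothesis q1 : 1 <= q.

Lemma opt_of_min y c : y = blocksum B [set: 'I_n]%SET c ->
  (forall c', y = blocksum B [set: 'I_n]%SET c' ->
     \sum_(i in [set: 'I_n]%SET) lqnorm q (B i *m c i) <=
     \sum_(i in [set: 'I_n]%SET) lqnorm q (B i *m c' i)) ->
  opt_lq_l1 q B y c.
Proof.
move=> Hc Hmin; split; first exact: Hc.
move=> c' Hc'; rewrite -(obj_setT q B c) -(obj_setT q B c'); exact: Hmin.
Qed.

Lemma dir1 :
  (forall (L : {set 'I_n}), #|L| = k ->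
     forall (y : 'cV[R]_D), in_blocksum B L y ->
     forall c : block_coef R m, opt_lq_l1 q B y c ->
     forall i : 'I_n, i \notin L -> B i *m c i = 0) ->
  forall (L : {set 'I_n}), #|L| = k ->
     forall (x : 'cV[R]_D), x != 0 ->
       in_blocksum B L x -> in_blocksum B (~: L) x ->
       W_lq q B L x < W_lq q B (~: L) x.
Proof.
move=> H1 L hL x x0 xL [cLc HcLc].
have xL' := xL.
case: xL' => cL HcL.
have HT : x = blocksum B [set: 'I_n]%SET (restrf L cL) by rewrite bsT_restr.
have [cs [Hcs Hcsmin]] := exists_min q1 HT.
have Hopt := opt_of_min Hcs Hcsmin.
have Hz := H1 L hL x xL cs Hopt.
have Hsplit := sumT_split L (fun i => B i *m cs i).
have Hz2 : \sum_(i in ~: L) B i *m cs i = 0.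
  apply: big1 => i; rewrite finset.in_setC; exact: Hz.
have HxL : x = blocksum B L cs.
  apply: (eq_trans Hcs); rewrite /blocksum Hsplit Hz2; exact: addr0.
have Hobj := sumord_split L (fun i => lqnorm q (B i *m cs i)).
have Hz3 : \sum_(i in ~: L) lqnorm q (B i *m cs i) = 0.
  apply: big1 => i; rewrite finset.in_setC => /Hz ->; exact: (lq0 q1 _).
have Hobj' : obj_lq_l1 q B cs = \sum_(i in L) lqnorm q (B i *m cs i).
  rewrite /obj_lq_l1 Hobj Hz3; exact: addr0.
have HWL : W_lq q B L x <= \sum_(i in L) lqnorm q (B i *m cs i) := W_le q HxL.
have [d [Hd Hdmin]] := exists_min q1 HcLc.
have HWc := W_min Hd Hdmin.
rewrite ltNge; apply/negP => Hle.
pose cd := restrf (~: L) d.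
have Hcd : x = blocksum B [set: 'I_n]%SET cd by rewrite /cd bsT_restr.
have Ecd : obj_lq_l1 q B cd = \sum_(i in ~: L) lqnorm q (B i *m d i).
  by apply: objT_restr.
have Hcdle : obj_lq_l1 q B cd <= obj_lq_l1 q B cs.
  rewrite Ecd Hobj'; apply: (le_trans _ (le_trans Hle HWL)).
  rewrite HWc; exact: lexx.
have Hoptd : opt_lq_l1 q B x cd.
  split; first exact: Hcd.
  move=> c' Hc'; apply: (le_trans Hcdle); case: Hopt => _ Hm; exact: Hm.
have Hz4 := H1 L hL x xL cd Hoptd.
have : x = 0.
  rewrite Hd /blocksum; apply: big1 => i Hi.
  have := Hz4 i; rewrite /cd /restrf Hi; apply.
  by move: Hi; rewrite finset.in_setC.
by move/eqP; rewrite (negbTE x0).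
Qed.

End mainproof2.
Local Close Scope classical_set_scope.

Theorem theorem2 (R : realType) (q : R) (D n : nat) (m : 'I_n -> nat)
  (B : block_dict R D m) (k : nat) :
  1 <= q -> (0 < k)%N -> (k < n)%N ->
  unit_norm_columns B -> disjoint_blocks B -> unique_kbs B k ->
  (forall (L : {set 'I_n}), #|L| = k ->
     forall (y : 'cV[R]_D), in_blocksum B L y ->
     forall c : block_coef R m, opt_lq_l1 q B y c ->
     forall i : 'I_n, i \notin L -> B i *m c i = 0)
  <->
  (forall (L : {set 'I_n}), #|L| = k ->
     forall (x : 'cV[R]_D), x != 0 ->
       in_blocksum B L x -> in_blocksum B (~: L) x ->
       W_lq q B L x < W_lq q B (~: L) x).
Proof.
move=> q1 _ _ _ _ _; split => H.
  exact: (dir1 q1 H).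
exact: (dir2 q1 H).
Qed.
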